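(* The following formulae provide biholomorphisms between the corresponding domains: \begin{itemize} \item $\mathbb L_2\ni w\mapsto (2iw_2,-w_1-w_2^2)\in \mathbb G_2$, \item $\mathbb L_3\ni w\mapsto (w_2+iw_3,-w_2+iw_3,-w_3^2-w_2^2-w_1)\in\mathbb E$, \item $\mathbb L_4\ni w\mapsto (w_3+iw_4,-w_3+iw_4,-w_2^2-w_3^2-w_4^2-w_1,2w_2)\in\mathbb F$. \end{itemize}
   Context: $L_n=\{z\in\mathbb B_n: \sqrt{(\sum_{j=1}^n|z_j|^2)^2-|\sum_{j=1}^nz_j^2|^2}<1-\sum_{j=1}^n|z_j|^2\}$ is the Lie ball and $\mathbb L_n:=\Lambda_n(L_n)$ with $\Lambda_n(z)=(z_1^2,z_2,\ldots,z_n)$. The symmetrized bidisc is $\mathbb G_2=\{(\lambda_1+\lambda_2,\lambda_1\lambda_2):\lambda_1,\lambda_2\in\mathbb D\}$. The tetrablock is $\mathbb E=\{(a_{11},a_{22},a_{11}a_{22}-a^2): \begin{pmatrix} a_{11} & a\\ a & a_{22}\end{pmatrix}\in\mathcal R_{III}(2)\}$, where $\mathcal R_{III}(2)$ is the set of symmetric $2\times 2$ complex matrices of operator norm $<1$. The domain $\mathbb F=\{(a_{11},a_{22},a_{11}a_{22}-a_{12}a_{21},a_{12}+a_{21}): \begin{pmatrix} a_{11} & a_{12}\\ a_{21} & a_{22}\end{pmatrix}\in\mathcal R_{I}(2\times 2)\}$, where $\mathcal R_{I}(2\times 2)$ is the set of $2\times 2$ complex matrices of operator norm $<1$. *)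

(* Defs.v *)
From HB Require Import structures.
From mathcomp Require Import all_boot all_order all_algebra.
From mathcomp Require Import all_classical all_reals all_analysis.
From mathcomp Require Import complex.
Import numFieldNormedType.Exports.
Import Order.TTheory GRing.Theory Num.Theory.

Set Implicit Arguments.
Unset Strict Implicit.
Unset Printing Implicit Defensive.

Local Open Scope ring_scope.
Local Open Scope classical_set_scope.

(* Complex numbers are R[i] for R : realType; C^n is the row space 'rV[R[i]]_n,
   which mathcomp-analysis equips with a normed-module structure over R[i].
   Hence [differentiable f z] below is complex (Frechet) differentiability,
   i.e. holomorphy. Coordinates are 0-based in Rocq: w_k of the paper is
   [w ord0 (inord (k-1))], abbreviated [cw w k] (1-based). *)

Section Domains.
Variable R : realType.
Local Notation C := R[i].

Definition cabs (z : C) : R := Num.sqrt (complex.Re z ^+ 2 + complex.Im z ^+ 2).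

Definition cw n (w : 'rV[C]_n.+1) (k : nat) : C := w ord0 (inord k.-1).

Definition mkpt n (s : seq C) : 'rV[C]_n := \row_(j < n) s`_j.

Definition sqnorm n (z : 'rV[C]_n) : R := \sum_(j < n) cabs (z ord0 j) ^+ 2.

Definition ball_n n : set 'rV[C]_n := [set z | sqnorm z < 1].

Definition LieBall n : set 'rV[C]_n :=
  [set z | @ball_n n z /\
     Num.sqrt (sqnorm z ^+ 2 - cabs (\sum_(j < n) z ord0 j ^+ 2) ^+ 2)
       < 1 - sqnorm z].

Definition Lambda n (z : 'rV[C]_n) : 'rV[C]_n :=
  \row_(j < n) (if val j == 0%N then z ord0 j ^+ 2 else z ord0 j).

Definition LL n : set 'rV[C]_n := Lambda (n:=n) @` @LieBall n.

Definition disc : set C := [set z | cabs z < 1].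

Definition G2 : set 'rV[C]_2 :=
  [set x | exists l1 l2, disc l1 /\ disc l2 /\ x = mkpt 2 [:: l1 + l2; l1 * l2]].

Definition vnorm2 (v : 'cV[C]_2) : R := Num.sqrt (\sum_(i < 2) cabs (v i ord0) ^+ 2).

Definition opnorm (A : 'M[C]_2) : R :=
  sup [set r | exists v : 'cV[C]_2, vnorm2 v = 1 /\ r = vnorm2 (A *m v)].

Definition RIII2 : set 'M[C]_2 := [set A | A^T = A /\ opnorm A < 1].
Definition RI22 : set 'M[C]_2 := [set A | opnorm A < 1].

Local Notation a00 A := (A ord0 ord0).
Local Notation a01 A := (A ord0 (inord 1)).
Local Notation a10 A := (A (inord 1) ord0).
Local Notation a11 A := (A (inord 1) (inord 1)).

Definition Tetrablock : set 'rV[C]_3 :=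
  [set x | exists A, RIII2 A /\
     x = mkpt 3 [:: a00 A; a11 A; a00 A * a11 A - a01 A ^+ 2]].

Definition Fdom : set 'rV[C]_4 :=
  [set x | exists A, RI22 A /\
     x = mkpt 4 [:: a00 A; a11 A; a00 A * a11 A - a01 A * a10 A; a01 A + a10 A]].

Definition cdifferentiable_at m n (f : 'rV[C]_m -> 'rV[C]_n) :=
  fun z => differentiable f z.
Definition holomorphic_on m n (D : set 'rV[C]_m) (f : 'rV[C]_m -> 'rV[C]_n) :=
  forall z, D z -> cdifferentiable_at f z.

Definition biholomorphism n (D1 D2 : set 'rV[C]_n) (f : 'rV[C]_n -> 'rV[C]_n) :=
  exists g : 'rV[C]_n -> 'rV[C]_n,
    [/\ forall z, D1 z -> D2 (f z) /\ g (f z) = z,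
        forall w, D2 w -> D1 (g w) /\ f (g w) = w,
        holomorphic_on D1 f & holomorphic_on D2 g].

End Domains.
Arguments LL {R} n _.
Arguments LieBall {R} n _.
Arguments ball_n {R} n _.
Arguments G2 {R} _.
Arguments Tetrablock {R} _.
Arguments Fdom {R} _.
Arguments disc {R} _.
Arguments RIII2 {R} _.
Arguments RI22 {R} _.

(* Main.v *)
Require Import Defs.
From HB Require Import structures.
From mathcomp Require Import all_boot all_order all_algebra.
From mathcomp Require Import all_classical all_reals all_analysis.
From mathcomp Require Import complex.
From mathcomp Require Import ring lra.
Import numFieldNormedType.Exports.
Import Order.TTheory GRing.Theory Num.Theory.
Local Open Scope ring_scope.
Set Implicit Arguments.
Unset Strict Implicit.


Section S.
Variable R : realType.
Local Notation C := R[i].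
Implicit Types (x y z : C).

Definition n2 (z : C) : R := complex.Re z ^+ 2 + complex.Im z ^+ 2.

Lemma ReD x y : complex.Re (x + y) = complex.Re x + complex.Re y.
Proof. by case: x; case: y. Qed.
Lemma ImD x y : complex.Im (x + y) = complex.Im x + complex.Im y.
Proof. by case: x; case: y. Qed.
Lemma ReN x : complex.Re (- x) = - complex.Re x.
Proof. by case: x. Qed.
Lemma ImN x : complex.Im (- x) = - complex.Im x.
Proof. by case: x. Qed.
Lemma ReB x y : complex.Re (x - y) = complex.Re x - complex.Re y.
Proof. by rewrite ReD ReN. Qed.
Lemma ImB x y : complex.Im (x - y) = complex.Im x - complex.Im y.
Proof. by rewrite ImD ImN. Qed.
Lemma ReM x y : complex.Re (x * y) = complex.Re x * complex.Re y - complex.Im x * complex.Im y.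
Proof. by case: x; case: y. Qed.
Lemma ImM x y : complex.Im (x * y) = complex.Re x * complex.Im y + complex.Im x * complex.Re y.
Proof. by case: x => a b; case: y => c d /=. Qed.
Lemma Rei : complex.Re ('i%C : C) = 0. Proof. by []. Qed.
Lemma Imi : complex.Im ('i%C : C) = 1. Proof. by []. Qed.
Lemma Re1 : complex.Re (1 : C) = 1. Proof. by []. Qed.
Lemma Im1 : complex.Im (1 : C) = 0. Proof. by []. Qed.
Lemma Re0 : complex.Re (0 : C) = 0. Proof. by []. Qed.
Lemma Im0 : complex.Im (0 : C) = 0. Proof. by []. Qed.
Lemma Ren k : complex.Re (k%:R : C) = k%:R.
Proof. elim: k => // k IH; by rewrite -addn1 natrD ReD IH natrD. Qed.
Lemma Imn k : complex.Im (k%:R : C) = 0.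
Proof. elim: k => // k IH; by rewrite -addn1 natrD ImD IH add0r. Qed.
Lemma ReJ x : complex.Re (x^*)%C = complex.Re x. Proof. by case: x. Qed.
Lemma ImJ x : complex.Im (x^*)%C = - complex.Im x. Proof. by case: x. Qed.

Definition ReImE := (ReB, ImB, ReD, ImD, ReN, ImN, ReM, ImM, Rei, Imi, Re1, Im1,
  Re0, Im0, Ren, Imn, ReJ, ImJ, expr2).

Lemma lagr2 (a b c d x y : C) :
  let u := a * x + b * y in let u' := c * x + d * y in
  let q := n2 u + n2 u' in let N := n2 x + n2 y in
  let F := n2 a + n2 b + n2 c + n2 d in let D := n2 (a * d - b * c) in
  let r := (u^*)%C * (b * (x^*)%C - a * (y^*)%C) + (u'^*)%C * (d * (x^*)%C - c * (y^*)%C) in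
  q ^+ 2 - F * q * N + D * N ^+ 2 = - n2 r.
Proof.
rewrite /= /n2 !ReImE.
ring.
Qed.
End S.


Section B.
Variable R : realType.
Local Notation C := R[i].
Implicit Types (x y z : C).

Lemma n2_ge0 z : 0 <= n2 z.
Proof. by rewrite /n2 addr_ge0 // sqr_ge0. Qed.

Lemma cabs2 z : cabs z ^+ 2 = n2 z.
Proof. by rewrite /cabs sqr_sqrtr // n2_ge0. Qed.

Lemma n2_eq0 z : n2 z = 0 -> z = 0.
Proof.
case: z => a b; rewrite /n2 /= => h.
have ha : a = 0 by nra.
have hb : b = 0 by nra.
by rewrite ha hb.
Qed.

Lemma ReC (k : R) : complex.Re (k%:C)%C = k. Proof. by []. Qed.
Lemma ImC (k : R) : complex.Im (k%:C)%C = 0. Proof. by []. Qed.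

Lemma sum2 (V : nmodType) (F : 'I_2 -> V) : \sum_(i < 2) F i = F ord0 + F (inord 1).
Proof.
rewrite big_ord_recr big_ord1 /=; congr (F _ + F _); apply: val_inj => //=.
by rewrite inordK.
Qed.

Lemma vnorm2E (v : 'cV[C]_2) :
  vnorm2 v = Num.sqrt (n2 (v ord0 ord0) + n2 (v (inord 1) ord0)).
Proof. by rewrite /vnorm2 sum2 !cabs2. Qed.

Lemma mulmx2E (A : 'M[C]_2) (v : 'cV[C]_2) i :
  (A *m v) i ord0 = A i ord0 * v ord0 ord0 + A i (inord 1) * v (inord 1) ord0.
Proof. by rewrite mxE sum2. Qed.

Definition mkv x y : 'cV[C]_2 := \col_(i < 2) (if val i == 0%N then x else y).
Lemma mkv0 x y : mkv x y ord0 ord0 = x. Proof. by rewrite mxE. Qed.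
Lemma mkv1 x y : mkv x y (inord 1) ord0 = y. Proof. by rewrite mxE /= inordK. Qed.

Section Mat.
Variable A : 'M[C]_2.
Local Notation a00 := (A ord0 ord0).
Local Notation a01 := (A ord0 (inord 1)).
Local Notation a10 := (A (inord 1) ord0).
Local Notation a11 := (A (inord 1) (inord 1)).

Definition qf x y := n2 (a00 * x + a01 * y) + n2 (a10 * x + a11 * y).
Definition Fn := n2 a00 + n2 a01 + n2 a10 + n2 a11.
Definition Dn := n2 (a00 * a11 - a01 * a10).

Lemma qfE (v : 'cV[C]_2) : vnorm2 (A *m v) ^+ 2 = qf (v ord0 ord0) (v (inord 1) ord0).
Proof. rewrite vnorm2E sqr_sqrtr; last by rewrite addr_ge0 ?n2_ge0. by rewrite !mulmx2E. Qed.

Lemma Fn_ge0 : 0 <= Fn. Proof. have := n2_ge0 a00; have := n2_ge0 a01; have := n2_ge0 a10; have := n2_ge0 a11. rewrite /Fn; lra. Qed.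
Lemma Dn_ge0 : 0 <= Dn. Proof. exact: n2_ge0. Qed.

Lemma unit_N (v : 'cV[C]_2) : vnorm2 v = 1 -> n2 (v ord0 ord0) + n2 (v (inord 1) ord0) = 1.
Proof.
rewrite vnorm2E => h.
by rewrite -(sqr_sqrtr (addr_ge0 (n2_ge0 _) (n2_ge0 _))) h expr1n.
Qed.

Lemma key_unit (v : 'cV[C]_2) : vnorm2 v = 1 ->
  let q := vnorm2 (A *m v) ^+ 2 in q ^+ 2 - Fn * q + Dn <= 0.
Proof.
move=> /unit_N hN /=; rewrite qfE.
have := lagr2 a00 a01 a10 a11 (v ord0 ord0) (v (inord 1) ord0).
rewrite /= hN expr1n !mulr1 -/(qf _ _) -/Fn -/Dn => ->.
by rewrite oppr_le0 n2_ge0.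
Qed.

End Mat.
End B.

Local Open Scope classical_set_scope.

Section Cs.
Variable R : realType.
Local Notation C := R[i].
Implicit Types (x y z : C).

Lemma sqrt_lt_iff (a b : R) : 0 < b -> (Num.sqrt a < b) <-> a < b ^+ 2.
Proof.
move=> hb; have hb2 : 0 < b ^+ 2 by rewrite exprn_gt0.
rewrite -[X in Num.sqrt a < X](@ger0_norm _ b) ?ltW // -sqrtr_sqr ltr_sqrt //.
Qed.

Lemma le_sqrt_of_sq (a b : R) : a ^+ 2 <= b -> a <= Num.sqrt b.
Proof.
move=> h; case/orP: (le_total a 0) => ha; first by apply: le_trans ha (sqrtr_ge0 _).
rewrite -(@ger0_norm _ a) // -sqrtr_sqr; exact: ler_wsqrtr.
Qed.

Lemma e0_unit : vnorm2 (mkv (1 : C) 0) = 1.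
Proof. by rewrite vnorm2E mkv0 mkv1 /n2 /= expr1n expr0n /= !addr0 sqrtr1. Qed.

Section Mat.
Variable A : 'M[C]_2.
Local Notation a00 := (A ord0 ord0).
Local Notation a01 := (A ord0 (inord 1)).
Local Notation a10 := (A (inord 1) ord0).
Local Notation a11 := (A (inord 1) (inord 1)).

Let S := [set r : R | exists v : 'cV[C]_2, vnorm2 v = 1 /\ r = vnorm2 (A *m v)].

Lemma S_ne : S !=set0.
Proof. by exists (vnorm2 (A *m mkv 1 0)); exists (mkv 1 0); split => //; exact: e0_unit. Qed.

Lemma q_le (v : 'cV[C]_2) : vnorm2 v = 1 ->
  vnorm2 (A *m v) ^+ 2 <= (Fn A + Num.sqrt (Fn A ^+ 2 - 4%:R * Dn A)) / 2%:R.
Proof.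
move=> /(key_unit A) /=; set q := vnorm2 _ ^+ 2 => h.
have : 2%:R * q - Fn A <= Num.sqrt (Fn A ^+ 2 - 4%:R * Dn A).
  by apply: le_sqrt_of_sq; nra.
lra.
Qed.

Lemma q_leF (v : 'cV[C]_2) : vnorm2 v = 1 -> vnorm2 (A *m v) ^+ 2 <= Fn A.
Proof.
move=> /(key_unit A) /=; set q := vnorm2 _ ^+ 2 => h.
have q0 : 0 <= q by rewrite /q sqr_ge0.
have := Dn_ge0 A; have := Fn_ge0 A => F0 D0.
have [->|qp] := eqVneq q 0; first by [].
have qp' : 0 < q by rewrite lt_def qp q0.
nra.
Qed.

Lemma S_ub : has_ubound S.
Proof.
exists (Num.sqrt (Fn A)) => r [v [hv ->]].
apply: le_sqrt_of_sq; exact: q_leF.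
Qed.

Lemma opnorm_le (r : R) : S r -> r <= opnorm A.
Proof. by move=> Sr; apply: (sup_upper_bound (conj S_ne S_ub)). Qed.

Lemma opnorm_lt1_of : Fn A < 2%:R -> 0 < 1 - Fn A + Dn A -> opnorm A < 1.
Proof.
move=> hF hD.
set lam := (Fn A + Num.sqrt (Fn A ^+ 2 - 4%:R * Dn A)) / 2%:R.
have hl : lam < 1.
  have : Num.sqrt (Fn A ^+ 2 - 4%:R * Dn A) < 2%:R - Fn A.
    apply/sqrt_lt_iff; [lra | nra].
  rewrite /lam; lra.
have hle : opnorm A <= Num.sqrt lam.
  apply: ge_sup; first exact: S_ne.
  move=> r [v [hv ->]]; apply: le_sqrt_of_sq; exact: q_le.
apply: (le_lt_trans hle); apply/sqrt_lt_iff => //; lra.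
Qed.

End Mat.
End Cs.


Section Ds.
Variable R : realType.
Local Notation C := R[i].
Implicit Types (x y z : C).

Lemma n2_scale z (k : R) : n2 (z * (k%:C)%C) = k ^+ 2 * n2 z.
Proof. rewrite /n2 !(ReImE, ReC, ImC); ring. Qed.

Section Mat.
Variable A : 'M[C]_2.
Local Notation a00 := (A ord0 ord0).
Local Notation a01 := (A ord0 (inord 1)).
Local Notation a10 := (A (inord 1) ord0).
Local Notation a11 := (A (inord 1) (inord 1)).

Lemma qf_scale x y (k : R) : qf A (x * (k%:C)%C) (y * (k%:C)%C) = k ^+ 2 * qf A x y.
Proof. rewrite /qf /n2 !(ReImE, ReC, ImC); ring. Qed.

Lemma opnorm_ge0 : 0 <= opnorm A.
Proof.
apply: le_trans (opnorm_le (r := vnorm2 (A *m mkv 1 0)) _).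
  by rewrite vnorm2E sqrtr_ge0.
by exists (mkv 1 0); split => //; exact: e0_unit.
Qed.

Lemma qf_le x y : qf A x y <= opnorm A ^+ 2 * (n2 x + n2 y).
Proof.
have s0 := opnorm_ge0.
have [N0|Np] := eqVneq (n2 x + n2 y) 0.
  have hx : n2 x = 0 by have := n2_ge0 x; have := n2_ge0 y; lra.
  have hy : n2 y = 0 by have := n2_ge0 x; have := n2_ge0 y; lra.
  rewrite (n2_eq0 hx) (n2_eq0 hy) /qf /n2 !ReImE; nra.
have Npos : 0 < n2 x + n2 y by rewrite lt_def Np addr_ge0 ?n2_ge0.
set N := n2 x + n2 y in Npos Np *.
set k := (Num.sqrt N)^-1.
have hk : k ^+ 2 * N = 1.
  by rewrite /k exprVn sqr_sqrtr ?ltW // mulVf.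
have hv : vnorm2 (mkv (x * (k%:C)%C) (y * (k%:C)%C)) = 1.
  by rewrite vnorm2E mkv0 mkv1 !n2_scale -mulrDr hk sqrtr1.
have := @opnorm_le _ A _ (ex_intro _ _ (conj hv erefl)).
have := qfE A (mkv (x * (k%:C)%C) (y * (k%:C)%C)).
rewrite mkv0 mkv1 qf_scale.
set w := vnorm2 _ => hw hle.
have w0 : 0 <= w by rewrite /w vnorm2E sqrtr_ge0.
have hw2 : w ^+ 2 <= opnorm A ^+ 2 by nra.
have : k ^+ 2 * qf A x y <= opnorm A ^+ 2 by rewrite -hw.
move=> h.
have : N * (k ^+ 2 * qf A x y) <= N * opnorm A ^+ 2 by rewrite ler_pM2l.
rewrite mulrA [N * _]mulrC hk mul1r mulrC => ->. done.
Qed.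


Lemma opnorm_lt1_to : opnorm A < 1 -> Fn A < 2%:R /\ 0 < 1 - Fn A + Dn A.
Proof.
move=> hs.
have s0 := opnorm_ge0.
set t := opnorm A ^+ 2.
have t0 : 0 <= t by rewrite /t sqr_ge0.
have t1 : t < 1 by rewrite /t; nra.
set M00 := n2 a00 + n2 a10.
set M11 := n2 a01 + n2 a11.
set h := - (((a00)^*)%C * a01 + ((a10)^*)%C * a11).
set p := t - M00.
set r := t - M11.
have I1 : t * (n2 1 + n2 0) - qf A 1 0 = p.
  rewrite /p /M00 /qf /n2 !(ReImE, ReC, ImC); ring.
have I2 : t * (n2 0 + n2 1) - qf A 0 1 = r.
  rewrite /r /M11 /qf /n2 !(ReImE, ReC, ImC); ring.
have I3 : t * (n2 (- h) + n2 (p%:C)%C) - qf A (- h) (p%:C)%C = p * (p * r - n2 h).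
  rewrite /p /r /h /M00 /M11 /qf /n2 !(ReImE, ReC, ImC); ring.
have I4 : t * (n2 (r%:C)%C + n2 (- (h^*)%C)) - qf A (r%:C)%C (- (h^*)%C) = r * (p * r - n2 h).
  rewrite /p /r /h /M00 /M11 /qf /n2 !(ReImE, ReC, ImC); ring.
have I5 : t * (n2 1 + n2 (- (h^*)%C)) - qf A 1 (- (h^*)%C) = p + (r - 2%:R) * n2 h.
  rewrite /p /r /h /M00 /M11 /qf /n2 !(ReImE, ReC, ImC); ring.
have I6 : M00 * M11 - n2 h = Dn A.
  rewrite /h /M00 /M11 /Dn /n2 !(ReImE, ReC, ImC); ring.
have I7 : Fn A = M00 + M11 by rewrite /Fn /M00 /M11; ring.
have J1 := qf_le 1 0; have J2 := qf_le 0 1; have J3 := qf_le (- h) (p%:C)%C.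
have J4 := qf_le (r%:C)%C (- (h^*)%C); have J5 := qf_le 1 (- (h^*)%C).
rewrite -/t in J1 J2 J3 J4 J5.
have hp : 0 <= p by lra.
have hr : 0 <= r by lra.
have h3 : 0 <= p * (p * r - n2 h) by lra.
have h4 : 0 <= r * (p * r - n2 h) by lra.
have h5 : 0 <= p + (r - 2%:R) * n2 h by lra.
have hh := n2_ge0 h.
have det0 : 0 <= p * r - n2 h.
  have [pp|p0] := ltrP 0 p.
    by rewrite -(pmulr_rge0 _ pp).
  have [rp|r0] := ltrP 0 r.
    by rewrite -(pmulr_rge0 _ rp).
  have ep : p = 0 by lra.
  have er : r = 0 by lra.
  rewrite ep er in h5 *; nra.
have edet : p * r - n2 h = t ^+ 2 - t * Fn A + Dn A.
  rewrite I7 -I6 /p /r; ring.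
have eF : Fn A = 2%:R * t - p - r by rewrite I7 /p /r; ring.
have e1 : 1 - Fn A + Dn A = (p * r - n2 h) + (1 - t) * (1 - t + p + r).
  by rewrite edet eF; ring.
split; first by lra.
rewrite e1.
have : 0 < (1 - t) * (1 - t + p + r) by apply: mulr_gt0; lra.
lra.
Qed.

Lemma opnorm_lt1 : opnorm A < 1 <-> Fn A < 2%:R /\ 0 < 1 - Fn A + Dn A.
Proof.
split; first exact: opnorm_lt1_to.
by case=> h1 h2; exact: opnorm_lt1_of.
Qed.

End Mat.
End Ds.


Section Es.
Variable R : realType.
Local Notation C := R[i].
Implicit Types (x y z : C).

Lemma sum3 (V : nmodType) (F : 'I_3 -> V) :
  \sum_(i < 3) F i = F (inord 0) + F (inord 1) + F (inord 2).
Proof.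
rewrite big_ord_recl big_ord_recr big_ord1 /= addrA.
by congr (F _ + F _ + F _); apply: val_inj; rewrite /= inordK.
Qed.

Lemma sum4 (V : nmodType) (F : 'I_4 -> V) :
  \sum_(i < 4) F i = F (inord 0) + F (inord 1) + F (inord 2) + F (inord 3).
Proof.
rewrite big_ord_recr big_ord_recr big_ord_recl big_ord1 /=.
by congr (F _ + F _ + F _ + F _); apply: val_inj; rewrite /= inordK.
Qed.

Lemma sum2' (V : nmodType) (F : 'I_2 -> V) :
  \sum_(i < 2) F i = F (inord 0) + F (inord 1).
Proof.
rewrite big_ord_recl big_ord1 /=.
by congr (F _ + F _); apply: val_inj; rewrite /= inordK.
Qed.

Lemma inord0 n : (inord 0 : 'I_n.+1) = ord0.
Proof. by apply: val_inj; rewrite /= inordK. Qed.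

Lemma sqnormE n (z : 'rV[C]_n) : sqnorm z = \sum_(j < n) n2 (z ord0 j).
Proof. by apply: eq_bigr => j _; rewrite cabs2. Qed.

Lemma lie_iff n (z : 'rV[C]_n) : LieBall n z <->
  sqnorm z < 1 /\ 2%:R * sqnorm z < 1 + n2 (\sum_(j < n) z ord0 j ^+ 2).
Proof.
rewrite /LieBall /ball_n /= cabs2.
have S0 := n2_ge0 (\sum_(j < n) z ord0 j ^+ 2).
split=> [[h1 h2]|[h1 h2]]; split => //.
  move/sqrt_lt_iff: h2 => /(_ _); rewrite subr_gt0 => /(_ h1); nra.
by apply/sqrt_lt_iff; [rewrite subr_gt0 | nra].
Qed.

Lemma cw_mkpt n (s : seq C) k : (0 < k)%N -> (k <= n.+1)%N -> cw (mkpt n.+1 s) k = s`_k.-1.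
Proof.
by move=> k0 kn; rewrite /cw /mkpt mxE inordK // prednK.
Qed.

Lemma cw_Lambda1 n (z : 'rV[C]_n.+1) : cw (Lambda z) 1 = z ord0 (inord 0) ^+ 2.
Proof. by rewrite /cw /Lambda mxE /= inordK. Qed.

Lemma cw_Lambda n (z : 'rV[C]_n.+1) k : (1 < k)%N -> (k <= n.+1)%N ->
  cw (Lambda z) k = z ord0 (inord k.-1).
Proof.
move=> k1 kn; rewrite /cw /Lambda mxE /= inordK; last by case: k k1 kn.
by case: k k1 kn => [|[|k]].
Qed.

Lemma rowP_cw n (w w' : 'rV[C]_n.+1) :
  (forall k, (0 < k)%N -> (k <= n.+1)%N -> cw w k = cw w' k) -> w = w'.
Proof.
move=> H; apply/rowP => j; have := H j.+1 isT (ltn_ord j).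
by rewrite /cw /= inord_val.
Qed.

Definition mkM (a b c d : C) : 'M[C]_2 :=
  \matrix_(i < 2, j < 2) (if val i == 0%N then (if val j == 0%N then a else b)
                          else (if val j == 0%N then c else d)).

Lemma mkM00 a b c d : mkM a b c d ord0 ord0 = a. Proof. by rewrite mxE. Qed.
Lemma mkM01 a b c d : mkM a b c d ord0 (inord 1) = b. Proof. by rewrite mxE /= inordK. Qed.
Lemma mkM10 a b c d : mkM a b c d (inord 1) ord0 = c. Proof. by rewrite mxE /= inordK. Qed.
Lemma mkM11 a b c d : mkM a b c d (inord 1) (inord 1) = d. Proof. by rewrite mxE /= inordK. Qed.
Definition mkME := (mkM00, mkM01, mkM10, mkM11).

Lemma mkM_sym a b d : (mkM a b b d)^T = mkM a b b d.
Proof.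
apply/matrixP => i j; rewrite !mxE.
by case: i => [[|[|i]] hi]; case: j => [[|[|j]] hj].
Qed.

Lemma two_pos (u v : R) : 0 < u * v -> 0 < u + v -> 0 < u /\ 0 < v.
Proof.
move=> h1 h2; case/orP: (le_total u 0) => hu.
  have hv : 0 < v by lra.
  have : u * v <= 0 by rewrite pmulr_lle0 // ; nra.
  lra.
case/orP: (le_total v 0) => hv.
  have : u * v <= 0 by nra.
  lra.
have hu' : u != 0 by apply/eqP => e; rewrite e mul0r in h1; lra.
have hv' : v != 0 by apply/eqP => e; rewrite e mulr0 in h1; lra.
by split; rewrite lt_def ?hu' ?hv'.
Qed.

Lemma inv2C : (2%:R : C)^-1 = (((2%:R : R)^-1)%:C)%C.
Proof. by rewrite -[(2%:R : C)](rmorph_nat (real_complex R)) -fmorphV. Qed.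

Lemma n2N z : n2 (- z) = n2 z.
Proof. rewrite /n2 !ReImE; ring. Qed.
Lemma n2M x y : n2 (x * y) = n2 x * n2 y.
Proof. rewrite /n2 !ReImE; ring. Qed.

Lemma disc_iff z : disc z <-> n2 z < 1.
Proof.
rewrite /disc /= /cabs -/(n2 z); split.
  by move/sqrt_lt_iff => /(_ ltr01); rewrite expr1n.
by move=> h; apply/sqrt_lt_iff => //; rewrite expr1n.
Qed.

Lemma sqri : ('i%C : C) ^+ 2 = -1.
Proof. exact: sqr_i. Qed.

End Es.


Section Fs.
Variable K : numFieldType.
Local Notation C := K.
Variable n : nat.
Local Notation V := 'rV[C]_n.+1.

Lemma diff_row m (f : V -> 'rV[C]_m) x :
  (forall j, differentiable (fun w => f w ord0 j) x) -> differentiable f x.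
Proof.
move=> H.
have -> : f = \sum_(j < m) (fun w => f w ord0 j *: delta_mx ord0 j).
  by rewrite fct_sumE; apply/funext => w; rewrite [LHS]row_sum_delta.
apply: differentiable_sum => j.
exact: differentiableZl.
Qed.

Lemma diff_mkpt' m (s : V -> seq C) x :
  (forall j, (j < m)%N -> differentiable (fun w => (s w)`_j) x) ->
  differentiable (fun w => \row_(j < m) (s w)`_j) x.
Proof.
move=> H; apply: diff_row => j.
have -> : (fun w => (\row_(j < m) (s w)`_j) ord0 j) = (fun w => (s w)`_j).
  by apply/funext => w; rewrite mxE.
exact: H.
Qed.

Lemma dD (f g : V -> C) x : differentiable f x -> differentiable g x ->
  differentiable (fun w => f w + g w) x.
Proof. exact: differentiableD. Qed.
Lemma dB (f g : V -> C) x : differentiable f x -> differentiable g x ->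
  differentiable (fun w => f w - g w) x.
Proof. exact: differentiableB. Qed.
Lemma dM (f g : V -> C) x : differentiable f x -> differentiable g x ->
  differentiable (fun w => f w * g w) x.
Proof. exact: differentiableM. Qed.
Lemma dN (f : V -> C) x : differentiable f x -> differentiable (fun w => - f w) x.
Proof. exact: differentiableN. Qed.
Lemma dcst (c : C) x : differentiable (fun _ : V => c) x.
Proof. exact: differentiable_cst. Qed.
Lemma dX (f : V -> C) k x : differentiable f x -> differentiable (fun w => f w ^+ k) x.
Proof.
move=> df; elim: k => [|k IH].
  have -> : (fun w => f w ^+ 0) = (fun _ => 1) by apply/funext => w; rewrite expr0.
  exact: dcst.
have -> : (fun w => f w ^+ k.+1) = (fun w => f w * f w ^+ k).
  by apply/funext => w; rewrite exprS.
exact: dM.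
Qed.
Lemma dcoord j x : differentiable (fun w : V => w ord0 j) x.
Proof. exact: differentiable_coord. Qed.

End Fs.

Ltac dtac := repeat first [apply: dD | apply: dB | apply: dN | apply: dX | apply: dcoord | apply: dcst | apply: dM].



Section Gs.
Variable R : realType.
Local Notation C := R[i].

Lemma mkpt_inord n (s : seq C) k : (k <= n)%N -> (mkpt n.+1 s) ord0 (inord k) = s`_k.
Proof. by move=> kn; rewrite /mkpt mxE inordK. Qed.

Lemma two_ne0 : (2%:R : C) != 0.
Proof. by rewrite pnatr_eq0. Qed.

Definition f1 (w : 'rV[C]_2) := mkpt 2 [:: 2%:R * 'i%C * cw w 2; - cw w 1 - cw w 2 ^+ 2].
Definition g1 (x : 'rV[C]_2) :=
  mkpt 2 [:: - cw x 2 - (- 'i%C * cw x 1 / 2%:R) ^+ 2; - 'i%C * cw x 1 / 2%:R].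

Lemma part1 : biholomorphism (LL 2) G2 f1.
Proof.
exists g1; split.
- move=> w [z Lz <-].
  set z1 := z ord0 (inord 0); set z2 := z ord0 (inord 1).
  have e1 : cw (Lambda z) 1 = z1 ^+ 2 by rewrite cw_Lambda1.
  have e2 : cw (Lambda z) 2 = z2 by rewrite cw_Lambda.
  split.
  + move/lie_iff: Lz; rewrite !sqnormE !sum2' -/z1 -/z2 => -[h1 h2].
    exists (z1 + 'i%C * z2), (- z1 + 'i%C * z2).
    have hs : n2 (z1 + 'i%C * z2) + n2 (- z1 + 'i%C * z2) = 2%:R * (n2 z1 + n2 z2).
      by rewrite /n2 !ReImE; ring.
    have hp : n2 (z1 + 'i%C * z2) * n2 (- z1 + 'i%C * z2) = n2 (z1 ^+ 2 + z2 ^+ 2).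
      by rewrite /n2 !ReImE; ring.
    have [ha hb] : 0 < 1 - n2 (z1 + 'i%C * z2) /\ 0 < 1 - n2 (- z1 + 'i%C * z2).
      by apply: two_pos; nra.
    split; first by apply/disc_iff; lra.
    split; first by apply/disc_iff; lra.
    rewrite /f1 e1 e2; congr (mkpt 2 [:: _; _]).
      by ring.
    by ring: (@sqri R).
  + apply: rowP_cw => k k0 kn.
    case: k k0 kn => [|[|[|k]]] //= _ _.
      rewrite /g1 cw_mkpt //= /f1 !cw_mkpt //= ?e1 ?e2; try by field: (@sqri R).
    rewrite /g1 cw_mkpt //= /f1 !cw_mkpt //= ?e1 ?e2; try by field: (@sqri R).
- move=> x [l1 [l2 [d1 [d2 ->]]]].
  move/disc_iff: d1 => d1; move/disc_iff: d2 => d2.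
  have a0 := n2_ge0 l1; have b0 := n2_ge0 l2.
  set z := mkpt 2 [:: (l1 - l2) / 2%:R; - 'i%C * (l1 + l2) / 2%:R].
  have ez1 : z ord0 (inord 0) = (l1 - l2) / 2%:R by rewrite mkpt_inord.
  have ez2 : z ord0 (inord 1) = - 'i%C * (l1 + l2) / 2%:R by rewrite mkpt_inord.
  have eg : g1 (mkpt 2 [:: l1 + l2; l1 * l2]) = Lambda z.
    apply: rowP_cw => k k0 kn.
    case: k k0 kn => [|[|[|k]]] //= _ _.
      rewrite /g1 cw_mkpt //= !cw_mkpt //= cw_Lambda1 ez1; try by field: (@sqri R).
    rewrite /g1 cw_mkpt //= !cw_mkpt //= cw_Lambda // ez2; try by field: (@sqri R).
  rewrite eg; split.
    exists z => //; apply/lie_iff; rewrite !sqnormE !sum2' ez1 ez2.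
    have hN : n2 ((l1 - l2) / 2%:R) + n2 (- 'i%C * (l1 + l2) / 2%:R) = (n2 l1 + n2 l2) / 2%:R.
      by rewrite inv2C /n2 !(ReImE, ReC, ImC); field.
    have hS : ((l1 - l2) / 2%:R) ^+ 2 + (- 'i%C * (l1 + l2) / 2%:R) ^+ 2 = - (l1 * l2).
      by field: (@sqri R).
    rewrite hN hS n2N n2M; split; nra.
  rewrite -eg; apply: rowP_cw => k k0 kn.
  case: k k0 kn => [|[|[|k]]] //= _ _.
    rewrite /f1 cw_mkpt //= /g1 !cw_mkpt //=; try by field: (@sqri R).
  rewrite /f1 cw_mkpt //= /g1 !cw_mkpt //=; try by field: (@sqri R).
- move=> z _; rewrite /cdifferentiable_at /f1.
  apply: diff_mkpt' => j _; case: j => [|[|j]] /=; dtac.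
- move=> z _; rewrite /cdifferentiable_at /g1.
  apply: diff_mkpt' => j _; case: j => [|[|j]] /=; dtac.
Qed.

End Gs.


Section Hs.
Variable R : realType.
Local Notation C := R[i].

Definition f2 (w : 'rV[C]_3) :=
  mkpt 3 [:: cw w 2 + 'i%C * cw w 3; - cw w 2 + 'i%C * cw w 3;
             - cw w 3 ^+ 2 - cw w 2 ^+ 2 - cw w 1].
Definition g2 (x : 'rV[C]_3) :=
  mkpt 3 [:: - cw x 3 - ((cw x 1 - cw x 2) / 2%:R) ^+ 2
               - (- 'i%C * (cw x 1 + cw x 2) / 2%:R) ^+ 2;
             (cw x 1 - cw x 2) / 2%:R; - 'i%C * (cw x 1 + cw x 2) / 2%:R].

Lemma part2 : biholomorphism (LL 3) Tetrablock f2.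
Proof.
exists g2; split.
- move=> w [z Lz <-].
  set z1 := z ord0 (inord 0); set z2 := z ord0 (inord 1); set z3 := z ord0 (inord 2).
  have e1 : cw (Lambda z) 1 = z1 ^+ 2 by rewrite cw_Lambda1.
  have e2 : cw (Lambda z) 2 = z2 by rewrite cw_Lambda.
  have e3 : cw (Lambda z) 3 = z3 by rewrite cw_Lambda.
  split.
  + move/lie_iff: Lz; rewrite !sqnormE !sum3 -/z1 -/z2 -/z3 => -[h1 h2].
    exists (mkM (z2 + 'i%C * z3) z1 z1 (- z2 + 'i%C * z3)).
    split; first split.
    * exact: mkM_sym.
    * apply/opnorm_lt1; rewrite /Fn /Dn !mkME.
      have hF : n2 (z2 + 'i%C * z3) + n2 z1 + n2 z1 + n2 (- z2 + 'i%C * z3)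
                = 2%:R * (n2 z1 + n2 z2 + n2 z3).
        by rewrite /n2 !ReImE; ring.
      have hD : (z2 + 'i%C * z3) * (- z2 + 'i%C * z3) - z1 * z1
                = - (z1 ^+ 2 + z2 ^+ 2 + z3 ^+ 2).
        by ring: (@sqri R).
      rewrite hF hD n2N; split; lra.
    * rewrite /f2 e1 e2 e3 !mkME; congr (mkpt 3 [:: _; _; _]).
      by ring: (@sqri R).
  + apply: rowP_cw => k k0 kn.
    case: k k0 kn => [|[|[|[|k]]]] //= _ _;
      rewrite /g2 cw_mkpt //= /f2 !cw_mkpt //= ?e1 ?e2 ?e3; try by field: (@sqri R).
- move=> x [A [[hT hA] ->]].
  move/opnorm_lt1: hA; rewrite /Fn /Dn.
  have h10 : A (inord 1) ord0 = A ord0 (inord 1) by rewrite -[in LHS]hT mxE.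
  rewrite h10.
  set a := A ord0 ord0; set b := A ord0 (inord 1); set d := A (inord 1) (inord 1).
  move=> [hF hD].
  set z := mkpt 3 [:: b; (a - d) / 2%:R; - 'i%C * (a + d) / 2%:R].
  have ez1 : z ord0 (inord 0) = b by rewrite mkpt_inord.
  have ez2 : z ord0 (inord 1) = (a - d) / 2%:R by rewrite mkpt_inord.
  have ez3 : z ord0 (inord 2) = - 'i%C * (a + d) / 2%:R by rewrite mkpt_inord.
  have eg : g2 (mkpt 3 [:: a; d; a * d - b ^+ 2]) = Lambda z.
    apply: rowP_cw => k k0 kn.
    case: k k0 kn => [|[|[|[|k]]]] //= _ _.
    + rewrite /g2 cw_mkpt //= !cw_mkpt //= cw_Lambda1 ez1; try by field: (@sqri R).
    + rewrite /g2 cw_mkpt //= !cw_mkpt //= cw_Lambda // ez2; try by field: (@sqri R).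
    + rewrite /g2 cw_mkpt //= !cw_mkpt //= cw_Lambda // ez3; try by field: (@sqri R).
  rewrite eg; split.
    exists z => //; apply/lie_iff; rewrite !sqnormE !sum3 ez1 ez2 ez3.
    have hN : n2 b + n2 ((a - d) / 2%:R) + n2 (- 'i%C * (a + d) / 2%:R)
              = (n2 a + n2 b + n2 b + n2 d) / 2%:R.
      by rewrite inv2C /n2 !(ReImE, ReC, ImC); field.
    have hS : b ^+ 2 + ((a - d) / 2%:R) ^+ 2 + (- 'i%C * (a + d) / 2%:R) ^+ 2
              = - (a * d - b * b).
      by field: (@sqri R).
    rewrite hN hS n2N; split; lra.
  rewrite -eg; apply: rowP_cw => k k0 kn.
  case: k k0 kn => [|[|[|[|k]]]] //= _ _;
    rewrite /f2 cw_mkpt //= /g2 !cw_mkpt //=; try by field: (@sqri R).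
- move=> z _; rewrite /cdifferentiable_at /f2.
  apply: diff_mkpt' => j _; case: j => [|[|[|j]]] /=; dtac.
- move=> z _; rewrite /cdifferentiable_at /g2.
  apply: diff_mkpt' => j _; case: j => [|[|[|j]]] /=; dtac.
Qed.

End Hs.


Section Is.
Variable R : realType.
Local Notation C := R[i].

Definition f3 (w : 'rV[C]_4) :=
  mkpt 4 [:: cw w 3 + 'i%C * cw w 4; - cw w 3 + 'i%C * cw w 4;
             - cw w 2 ^+ 2 - cw w 3 ^+ 2 - cw w 4 ^+ 2 - cw w 1;
             2%:R * cw w 2].
Definition g3 (x : 'rV[C]_4) :=
  mkpt 4 [:: - cw x 3 - (cw x 4 / 2%:R) ^+ 2 - ((cw x 1 - cw x 2) / 2%:R) ^+ 2
               - (- 'i%C * (cw x 1 + cw x 2) / 2%:R) ^+ 2;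
             cw x 4 / 2%:R;
             (cw x 1 - cw x 2) / 2%:R; - 'i%C * (cw x 1 + cw x 2) / 2%:R].

Lemma part3 : biholomorphism (LL 4) Fdom f3.
Proof.
exists g3; split.
- move=> w [z Lz <-].
  set z1 := z ord0 (inord 0); set z2 := z ord0 (inord 1).
  set z3 := z ord0 (inord 2); set z4 := z ord0 (inord 3).
  have e1 : cw (Lambda z) 1 = z1 ^+ 2 by rewrite cw_Lambda1.
  have e2 : cw (Lambda z) 2 = z2 by rewrite cw_Lambda.
  have e3 : cw (Lambda z) 3 = z3 by rewrite cw_Lambda.
  have e4 : cw (Lambda z) 4 = z4 by rewrite cw_Lambda.
  split.
  + move/lie_iff: Lz; rewrite !sqnormE !sum4 -/z1 -/z2 -/z3 -/z4 => -[h1 h2].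
    exists (mkM (z3 + 'i%C * z4) (z2 + 'i%C * z1) (z2 - 'i%C * z1) (- z3 + 'i%C * z4)).
    split.
    * apply/opnorm_lt1; rewrite /Fn /Dn !mkME.
      have hF : n2 (z3 + 'i%C * z4) + n2 (z2 + 'i%C * z1) + n2 (z2 - 'i%C * z1)
                + n2 (- z3 + 'i%C * z4)
                = 2%:R * (n2 z1 + n2 z2 + n2 z3 + n2 z4).
        by rewrite /n2 !ReImE; ring.
      have hD : (z3 + 'i%C * z4) * (- z3 + 'i%C * z4) - (z2 + 'i%C * z1) * (z2 - 'i%C * z1)
                = - (z1 ^+ 2 + z2 ^+ 2 + z3 ^+ 2 + z4 ^+ 2).
        by ring: (@sqri R).
      rewrite hF hD n2N; split; lra.
    * rewrite /f3 e1 e2 e3 e4 !mkME; congr (mkpt 4 [:: _; _; _; _]).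
        by ring: (@sqri R).
      by ring.
  + apply: rowP_cw => k k0 kn.
    case: k k0 kn => [|[|[|[|[|k]]]]] //= _ _;
      rewrite /g3 cw_mkpt //= /f3 !cw_mkpt //= ?e1 ?e2 ?e3 ?e4; try by field: (@sqri R).
- move=> x [A [hA ->]].
  move/opnorm_lt1: hA; rewrite /Fn /Dn.
  set a := A ord0 ord0; set b := A ord0 (inord 1).
  set c := A (inord 1) ord0; set d := A (inord 1) (inord 1).
  move=> [hF hD].
  set z := mkpt 4 [:: - 'i%C * (b - c) / 2%:R; (b + c) / 2%:R; (a - d) / 2%:R;
                      - 'i%C * (a + d) / 2%:R].
  have ez1 : z ord0 (inord 0) = - 'i%C * (b - c) / 2%:R by rewrite mkpt_inord.
  have ez2 : z ord0 (inord 1) = (b + c) / 2%:R by rewrite mkpt_inord.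
  have ez3 : z ord0 (inord 2) = (a - d) / 2%:R by rewrite mkpt_inord.
  have ez4 : z ord0 (inord 3) = - 'i%C * (a + d) / 2%:R by rewrite mkpt_inord.
  have eg : g3 (mkpt 4 [:: a; d; a * d - b * c; b + c]) = Lambda z.
    apply: rowP_cw => k k0 kn.
    case: k k0 kn => [|[|[|[|[|k]]]]] //= _ _.
    + rewrite /g3 cw_mkpt //= !cw_mkpt //= cw_Lambda1 ez1; try by field: (@sqri R).
    + rewrite /g3 cw_mkpt //= !cw_mkpt //= cw_Lambda // ez2; try by field: (@sqri R).
    + rewrite /g3 cw_mkpt //= !cw_mkpt //= cw_Lambda // ez3; try by field: (@sqri R).
    + rewrite /g3 cw_mkpt //= !cw_mkpt //= cw_Lambda // ez4; try by field: (@sqri R).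
  rewrite eg; split.
    exists z => //; apply/lie_iff; rewrite !sqnormE !sum4 ez1 ez2 ez3 ez4.
    have hN : n2 (- 'i%C * (b - c) / 2%:R) + n2 ((b + c) / 2%:R) + n2 ((a - d) / 2%:R)
              + n2 (- 'i%C * (a + d) / 2%:R)
              = (n2 a + n2 b + n2 c + n2 d) / 2%:R.
      by rewrite inv2C /n2 !(ReImE, ReC, ImC); field.
    have hS : (- 'i%C * (b - c) / 2%:R) ^+ 2 + ((b + c) / 2%:R) ^+ 2 + ((a - d) / 2%:R) ^+ 2
              + (- 'i%C * (a + d) / 2%:R) ^+ 2 = - (a * d - b * c).
      by field: (@sqri R).
    rewrite hN hS n2N; split; lra.
  rewrite -eg; apply: rowP_cw => k k0 kn.
  case: k k0 kn => [|[|[|[|[|k]]]]] //= _ _;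
    rewrite /f3 cw_mkpt //= /g3 !cw_mkpt //=; try by field: (@sqri R).
- move=> z _; rewrite /cdifferentiable_at /f3.
  apply: diff_mkpt' => j _; case: j => [|[|[|[|j]]]] /=; dtac.
- move=> z _; rewrite /cdifferentiable_at /g3.
  apply: diff_mkpt' => j _; case: j => [|[|[|[|j]]]] /=; dtac.
Qed.

End Is.


Unset Implicit Arguments.
Set Strict Implicit.

Theorem corollary3p9 (R : realType) :
  [/\ biholomorphism (LL 2) G2
        (fun w : 'rV[R[i]]_2 =>
           mkpt 2 [:: 2%:R * 'i%C * cw w 2; - cw w 1 - cw w 2 ^+ 2]),
      biholomorphism (LL 3) Tetrablock
        (fun w : 'rV[R[i]]_3 =>
           mkpt 3 [:: cw w 2 + 'i%C * cw w 3; - cw w 2 + 'i%C * cw w 3;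
                      - cw w 3 ^+ 2 - cw w 2 ^+ 2 - cw w 1])
    & biholomorphism (LL 4) Fdom
        (fun w : 'rV[R[i]]_4 =>
           mkpt 4 [:: cw w 3 + 'i%C * cw w 4; - cw w 3 + 'i%C * cw w 4;
                      - cw w 2 ^+ 2 - cw w 3 ^+ 2 - cw w 4 ^+ 2 - cw w 1;
                      2%:R * cw w 2])].
Proof.
split.
- exact: (@part1 R).
- exact: (@part2 R).
- exact: (@part3 R).
Qed.
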